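(* Let $T\ge2$ be an integer and $\gamma\in\mathbb{R}$. Let $\{\hat c^n_t: n\ge1,\ 1\le t\le T-1\}$ be independent, identically distributed real random variables with mean $c$ and variance $\sigma^2<\infty$. Let $\alpha_{n-1,t}$ ($n\ge1$, $1\le t\le T-1$) be deterministic real numbers. Set $\bar v^0_t=0$ for $1\le t\le T-1$ and $\bar v^n_T=0$ for all $n\ge0$, and for $n\ge1$, $1\le t\le T-1$, $$\hat v^n_t=\hat c^n_t+\gamma\bar v^{n-1}_{t+1},\qquad \bar v^n_t=(1-\alpha_{n-1,t})\bar v^{n-1}_t+\alpha_{n-1,t}\hat v^n_t.$$ For $1\le t,t'\le T-1$ define $\delta^1_t=\alpha_{0,t}$, $\lambda^1_{t,t'}=\alpha_{0,t}^2\mathbf 1_{\{t=t'\}}$, and for $n>1$, $$\delta^n_t=(1+\gamma\delta^{n-1}_{t+1})\alpha_{n-1,t}+(1-\alpha_{n-1,t})\delta^{n-1}_t,$$ $$\lambda^n_{t,t'}=\alpha_{n-1,t}^2\mathbf 1_{\{t=t'\}}+J^{n-1}_{t,t'}+K^{n-1}_{t,t'}+L^{n-1}_{t,t'}+M^{n-1}_{t,t'},$$ where $J^{n-1}_{t,t'}=(1-\alpha_{n-1,t})(1-\alpha_{n-1,t'})\lambda^{n-1}_{t,t'}$, $K^{n-1}_{t,t'}=\gamma(1-\alpha_{n-1,t})\alpha_{n-1,t'}\lambda^{n-1}_{t,t'+1}$, $L^{n-1}_{t,t'}=\gamma\alpha_{n-1,t}(1-\alpha_{n-1,t'})\lambda^{n-1}_{t+1,t'}$,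 $M^{n-1}_{t,t'}=\gamma^2\alpha_{n-1,t}\alpha_{n-1,t'}\lambda^{n-1}_{t+1,t'+1}$, with the conventions $\delta^m_T=0$ and $\lambda^m_{t,T}=\lambda^m_{T,t'}=0$ for all $m$. Then for all $n\ge1$ and $1\le t,t'\le T-1$, $\mathbb{E}(\bar v^n_t)=\delta^n_tc$ and $\mathrm{Cov}(\bar v^n_t,\bar v^n_{t'})=\lambda^n_{t,t'}\sigma^2$.
   Context: This is a finite-horizon (horizon $T$) version of approximate value iteration for a single-state, single-action problem, where at each iteration $n$ the updates are performed for all $t=1,\dots,T-1$, and the terminal value is $0$. *)

(* Defs.v *)
From HB Require Import structures.
From mathcomp Require Import all_boot all_order all_algebra.
From mathcomp Require Import all_classical all_reals all_analysis.
Set Implicit Arguments. Unset Strict Implicit. Unset Printing Implicit Defensive.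
Import Order.TTheory GRing.Theory Num.Theory.
Local Open Scope classical_set_scope.
Local Open Scope ring_scope.

Definition mutually_independent d (Om : measurableType d) (R : realType)
  (P : probability Om R) (I : eqType) (D : set I) (X : I -> {RV P >-> R}) :=
  forall (s : seq I) (B : I -> set R),
    uniq s -> (forall i, i \in s -> D i) -> (forall i, measurable (B i)) ->
    P (\big[setI/setT]_(i <- s) (X i @^-1` B i)) =
    (\prod_(i <- s) P (X i @^-1` B i))%E.

Definition identically_distributed d (Om : measurableType d) (R : realType)
  (P : probability Om R) (I : Type) (D : set I) (X : I -> {RV P >-> R}) :=
  forall i j, D i -> D j -> distribution P (X i) = distribution P (X j).

Definition in_range (T t : nat) : bool := (1 <= t)%N && (t <= T - 1)%N.

Fixpoint vbar d (Om : measurableType d) (R : realType) (T : nat) (gamma : R)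
  (alpha : nat -> nat -> R) (chat : nat -> nat -> Om -> R) (n t : nat)
  : Om -> R :=
  match n with
  | 0 => fun _ => 0
  | m.+1 => fun w =>
      if in_range T t then
        (1 - alpha m t) * vbar T gamma alpha chat m t w
        + alpha m t * (chat m.+1 t w + gamma * vbar T gamma alpha chat m t.+1 w)
      else 0
  end.

Definition vhat d (Om : measurableType d) (R : realType) (T : nat) (gamma : R)
  (alpha : nat -> nat -> R) (chat : nat -> nat -> Om -> R) (n t : nat)
  : Om -> R :=
  fun w => chat n t w + gamma * vbar T gamma alpha chat n.-1 t.+1 w.

Fixpoint delta (R : realType) (T : nat) (gamma : R) (alpha : nat -> nat -> R)
  (n t : nat) : R :=
  match n with
  | 0 => 0 (* unused *)
  | 1 => if in_range T t then alpha 0%N t else 0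
  | (m.+1) as k =>
      if in_range T t then
        (1 + gamma * delta T gamma alpha m t.+1) * alpha m t
        + (1 - alpha m t) * delta T gamma alpha m t
      else 0
  end.

Fixpoint lambda (R : realType) (T : nat) (gamma : R) (alpha : nat -> nat -> R)
  (n t t' : nat) : R :=
  match n with
  | 0 => 0 (* unused *)
  | 1 => if in_range T t && in_range T t' then
           alpha 0%N t ^+ 2 * (t == t')%:R else 0
  | (m.+1) as k =>
      if in_range T t && in_range T t' then
        alpha m t ^+ 2 * (t == t')%:R
        + (1 - alpha m t) * (1 - alpha m t') * lambda T gamma alpha m t t'
        + gamma * (1 - alpha m t) * alpha m t' * lambda T gamma alpha m t t'.+1
        + gamma * alpha m t * (1 - alpha m t') * lambda T gamma alpha m t.+1 t'
        + gamma ^+ 2 * alpha m t * alpha m t' * lambda T gamma alpha m t.+1 t'.+1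
      else 0
  end.

(* Main.v *)
Require Import Defs.
From HB Require Import structures.
From mathcomp Require Import all_boot all_order all_algebra.
From mathcomp Require Import all_classical all_reals all_analysis.
From mathcomp Require Import measurable_realfun ring.
Import Order.TTheory GRing.Theory Num.Theory.
Local Open Scope classical_set_scope.
Local Open Scope ring_scope.

Section indep.
Local Open Scope ereal_scope.
Context {R : realType} {d : measure_display} {Om : measurableType d} {P : probability Om R}.

Lemma indep_mul (X Y : {RV P >-> R}) :
  (forall A B, measurable A -> measurable B ->
     P (X @^-1` A `&` Y @^-1` B) = (P (X @^-1` A) * P (Y @^-1` B))%E) ->
  (X : Om -> R) \in Lfun P 2%:E -> (Y : Om -> R) \in Lfun P 2%:E ->
  ('E_P[(X * Y)%R] = 'E_P[X] * 'E_P[Y])%E.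
Proof.
move=> ind HX HY.
have Pfin : P setT \is a fin_num := fin_num_measure P _ measurableT.
have X1 := Lfun_subset12 Pfin HX.
have Y1 := Lfun_subset12 Pfin HY.
have XY1 := Lfun2_mul_Lfun1 HX HY.
have mX : measurable_fun setT X := measurable_funP X.
have mY : measurable_fun setT Y := measurable_funP Y.
pose Z := fun w => (X w, Y w).
have mZ : measurable_fun setT Z := measurable_fun_pair mX mY.
pose mu := pushforward P Z.
pose f := fun z : R * R => (z.1 * z.2)%:E.
have mf : measurable_fun [set: (R * R)%type] f.
  apply/measurable_EFinP => /=; apply: measurable_funM => //.
have intXY : P.-integrable (Z @^-1` setT) (f \o Z).
  by rewrite preimage_setT; exact/Lfun1_integrable.
have intf : mu.-integrable setT f := integrable_pushforward mZ mf intXY measurableT.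
pose dX := distribution P X.
pose dY := distribution P Y.
have muE A : measurable A -> (dX \x dY)%E A = mu A.
  move=> mA; apply: (product_measure_unique _ mA) => A1 A2 mA1 mA2.
  exact: ind.
have intp : (dX \x dY)%E.-integrable setT f.
  apply/integrableP; split => //.
  rewrite (eq_measure_integral mu); last by move=> A mA _; exact: muE.
  by move/integrableP: intf => [].
have mid : measurable_fun [set: R] (fun x : R => x%:E) by apply/measurable_EFinP.
have intXd : dX.-integrable setT (fun x : R => x%:E).
  apply: (integrable_pushforward mX mid) => //.
  by rewrite preimage_setT; exact/Lfun1_integrable.
have intYd : dY.-integrable setT (fun x : R => x%:E).
  apply: (integrable_pushforward mY mid) => //.
  by rewrite preimage_setT; exact/Lfun1_integrable.
have EXE : 'E_P[X] = (\int[dX]_x x%:E)%E.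
  rewrite (integral_pushforward mX mid) ?preimage_setT//; last exact/Lfun1_integrable.
  by rewrite unlock.
have EYE : 'E_P[Y] = (\int[dY]_x x%:E)%E.
  rewrite (integral_pushforward mY mid) ?preimage_setT//; last exact/Lfun1_integrable.
  by rewrite unlock.
have EXY : 'E_P[(X * Y)%R] = (\int[mu]_z f z)%E.
  rewrite (integral_pushforward mZ mf) ?preimage_setT//.
  by rewrite unlock.
rewrite EXY -(eq_measure_integral _ (fun A mA _ => muE A mA)).
rewrite -(integral12_prod_meas1 intp) /fubini_F.
have EYfin : (\int[dY]_x x%:E)%E \is a fin_num.
  by rewrite -EYE expectation_fin_num.
under eq_integral => x _.
  rewrite /f /=.
  under eq_integral => y _ do rewrite EFinM.
  rewrite integralZl //.
  rewrite -(fineK EYfin).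
  over.
rewrite /= integralZr // -EXE EYE fineK //.
exact: mZ.
Qed.
End indep.

Section lin.
Context {R : realType} {d : measure_display} {Om : measurableType d} {P : probability Om R}.

Lemma L2D (X Y : Om -> R) : X \in Lfun P 2%:E -> Y \in Lfun P 2%:E -> (X \+ Y) \in Lfun P 2%:E.
Proof. move=> hx hy; have := (@Lfun_addr_closed _ _ _ P 2%:E ltac:(by rewrite lee_fin ler1n)).2 _ _ hx hy; exact. Qed.

Lemma L2Z (X : Om -> R) a : X \in Lfun P 2%:E -> (a \o* X) \in Lfun P 2%:E.
Proof. by move=> hx; apply: Lfun_scale => //; rewrite ler1n. Qed.

Lemma L21 (X : Om -> R) : X \in Lfun P 2%:E -> X \in Lfun P 1.
Proof. by apply: Lfun_subset12; exact: fin_num_measure. Qed.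

Lemma L2M (X Y : Om -> R) : X \in Lfun P 2%:E -> Y \in Lfun P 2%:E -> (X * Y)%R \in Lfun P 1.
Proof. exact: Lfun2_mul_Lfun1. Qed.

Lemma covZD3r (X Y1 Y2 Y3 : Om -> R) b1 b2 b3 c1 c2 c3 :
  X \in Lfun P 2%:E -> Y1 \in Lfun P 2%:E -> Y2 \in Lfun P 2%:E -> Y3 \in Lfun P 2%:E ->
  covariance P X Y1 = c1%:E -> covariance P X Y2 = c2%:E -> covariance P X Y3 = c3%:E ->
  covariance P X (b1 \o* Y1 \+ b2 \o* Y2 \+ b3 \o* Y3) = (b1 * c1 + b2 * c2 + b3 * c3)%:E.
Proof.
move=> hX h1 h2 h3 e1 e2 e3.
rewrite covarianceDr ?L2D ?L2Z // covarianceDr ?L2Z //.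
rewrite !covarianceZr ?L2M ?L21 // e1 e2 e3.
by rewrite -!EFinM -!EFinD.
Qed.

Lemma covZD3l (Y X1 X2 X3 : Om -> R) b1 b2 b3 c1 c2 c3 :
  Y \in Lfun P 2%:E -> X1 \in Lfun P 2%:E -> X2 \in Lfun P 2%:E -> X3 \in Lfun P 2%:E ->
  covariance P X1 Y = c1%:E -> covariance P X2 Y = c2%:E -> covariance P X3 Y = c3%:E ->
  covariance P (b1 \o* X1 \+ b2 \o* X2 \+ b3 \o* X3) Y = (b1 * c1 + b2 * c2 + b3 * c3)%:E.
Proof.
move=> hY h1 h2 h3 e1 e2 e3.
rewrite covarianceC (@covZD3r Y X1 X2 X3 b1 b2 b3 c1 c2 c3 hY h1 h2 h3) //.
- by rewrite covarianceC.
- by rewrite covarianceC.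
- by rewrite covarianceC.
Qed.

Lemma expZD3 (X1 X2 X3 : Om -> R) b1 b2 b3 c1 c2 c3 :
  X1 \in Lfun P 2%:E -> X2 \in Lfun P 2%:E -> X3 \in Lfun P 2%:E ->
  ('E_P[X1] = c1%:E)%E -> ('E_P[X2] = c2%:E)%E -> ('E_P[X3] = c3%:E)%E ->
  ('E_P[(b1 \o* X1 \+ b2 \o* X2 \+ b3 \o* X3)%R] = (b1 * c1 + b2 * c2 + b3 * c3)%:E)%E.
Proof.
move=> h1 h2 h3 e1 e2 e3.
rewrite expectationD ?L21 ?L2D ?L2Z // expectationD ?L21 ?L2Z //.
rewrite !expectationZl ?L21 // e1 e2 e3.
by rewrite -!EFinM -!EFinD.
Qed.
End lin.


Lemma deltaS (R : realType) (T : nat) (g : R) (a : nat -> nat -> R) n t :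
  delta T g a n.+1 t = if in_range T t then
    (1 + g * delta T g a n t.+1) * a n t + (1 - a n t) * delta T g a n t else 0.
Proof. by case: n => [|n] /=; case: ifP => // _; ring. Qed.

Lemma lambdaS (R : realType) (T : nat) (g : R) (a : nat -> nat -> R) n t t' :
  lambda T g a n.+1 t t' = if in_range T t && in_range T t' then
        a n t ^+ 2 * (t == t')%:R
        + (1 - a n t) * (1 - a n t') * lambda T g a n t t'
        + g * (1 - a n t) * a n t' * lambda T g a n t t'.+1
        + g * a n t * (1 - a n t') * lambda T g a n t.+1 t'
        + g ^+ 2 * a n t * a n t' * lambda T g a n t.+1 t'.+1
      else 0.
Proof. by case: n => [|n] /=; case: ifP => // _; ring. Qed.

Section main.
Context (R : realType) (d : measure_display) (Om : measurableType d)
  (P : probability Om R) (T : nat) (gamma c sigma2 : R)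
  (alpha : nat -> nat -> R) (chat : nat -> nat -> {RV P >-> R}).
Context (Hind : mutually_independent
    [set nt : nat * nat | (1 <= nt.1)%N /\ in_range T nt.2]
    (fun nt => chat nt.1 nt.2)).
Context (Hmom : forall n t, (1 <= n)%N -> in_range T t ->
     (chat n t : Om -> R) \in Lfun P 2%:E /\
     ('E_P[chat n t] = c%:E)%E /\ variance P (chat n t) = sigma2%:E).

Local Notation V n t := (vbar T gamma alpha (fun m s => (chat m s : Om -> R)) n t).

Lemma pair_indep n t m s : (1 <= n)%N -> in_range T t -> (1 <= m)%N -> in_range T s ->
  (n, t) != (m, s) ->
  forall A B, measurable A -> measurable B ->
  P (chat n t @^-1` A `&` chat m s @^-1` B) =
    (P (chat n t @^-1` A) * P (chat m s @^-1` B))%E.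
Proof.
move=> hn ht hm hs ne A B mA mB.
have := Hind [:: (n, t); (m, s)] (fun k => if k == (n, t) then A else B).
rewrite !big_cons !big_nil /= setIT mule1 eqxx eq_sym (negbTE ne).
apply.
- by rewrite /= inE andbT.
- by move=> k; rewrite !inE => /orP[] /eqP ->.
- by move=> k; case: ifP.
Qed.

Lemma cov_chat n t m s : (1 <= n)%N -> in_range T t -> (1 <= m)%N -> in_range T s ->
  covariance P (chat n t) (chat m s) = (((n, t) == (m, s))%:R * sigma2)%:E.
Proof.
move=> hn ht hm hs.
have [Ln [En Vn]] := Hmom _ _ hn ht.
have [Lm [Em Vm]] := Hmom _ _ hm hs.
case: eqP => [[<- <-]|/eqP ne].
  by rewrite mul1r; exact: Vn.
rewrite mul0r covarianceE ?L2M ?L21 //.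
rewrite (indep_mul _ _ (@pair_indep n t m s hn ht hm hs ne)) // En Em -EFinM.
rewrite subee //.
Qed.

Lemma claim n : [/\ forall t, V n t \in Lfun P 2%:E,
  forall t, ('E_P[V n t] = (delta T gamma alpha n t * c)%:E)%E,
  forall t t', covariance P (V n t) (V n t') =
               (lambda T gamma alpha n t t' * sigma2)%:E &
  forall m s t, (n < m)%N -> in_range T s ->
     covariance P (chat m s) (V n t) = 0%:E].
Proof.
elim: n => [|n [IL IE IC ID]].
  have V0 t : V 0 t = cst 0 by [].
  split.
  - by move=> t; rewrite V0 Lfun_cst.
  - by move=> t; rewrite V0 expectation_cst /= mul0r.
  - by move=> t t'; rewrite V0 covariance_cst_l /= mul0r.
  - by move=> m s t _ _; rewrite V0 covariance_cst_r.
have VS t : V n.+1 t = if in_range T t then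
    ((1 - alpha n t) \o* V n t \+ alpha n t \o* (chat n.+1 t : Om -> R)
      \+ (alpha n t * gamma) \o* V n t.+1)%R else cst 0.
  case: ifP => H; apply/funext => w /=; rewrite H //; ring.
have LC t : in_range T t -> (chat n.+1 t : Om -> R) \in Lfun P 2%:E.
  by move=> Ht; have [] := Hmom _ _ (ltn0Sn n) Ht.
have VL t : V n.+1 t \in Lfun P 2%:E.
  rewrite VS; case: ifP => Ht; last exact: Lfun_cst.
  by apply: L2D; [apply: L2D|]; apply: L2Z => //; exact: LC.
split => //.
- move=> t; rewrite VS deltaS; case: ifP => Ht; last first.
    by rewrite expectation_cst mul0r.
  have [_ [EC _]] := Hmom _ _ (ltn0Sn n) Ht.
  rewrite (expZD3 _ _ _ _ _ _ _ _ _ (IL t) (LC t Ht) (IL t.+1) (IE t) EC (IE t.+1)).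
  congr EFin; ring.
- move=> t t'; rewrite lambdaS.
  case: (boolP (in_range T t)) => Ht; last first.
    by rewrite (VS t) (negbTE Ht) covariance_cst_l /= mul0r.
  case: (boolP (in_range T t')) => Ht'; last first.
    by rewrite (VS t') (negbTE Ht') covariance_cst_r andbF /= mul0r.
  rewrite (VS t) (VS t') ?Ht ?Ht' /=.
  have cross u v : in_range T v -> covariance P (V n u) (chat n.+1 v) = 0%:E.
    by move=> Hv; rewrite covarianceC ID.
  have crossC : covariance P (chat n.+1 t) (chat n.+1 t') =
      ((t == t')%:R * sigma2)%:E.
    by rewrite cov_chat // xpair_eqE eqxx.
  have c1E := covZD3r _ _ _ _ (1 - alpha n t') (alpha n t') (alpha n t' * gamma) _ _ _
     (IL t) (IL t') (LC t' Ht') (IL t'.+1) (IC t t') (cross t t' Ht') (IC t t'.+1).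
  have c2E := covZD3r _ _ _ _ (1 - alpha n t') (alpha n t') (alpha n t' * gamma) _ _ _
     (LC t Ht) (IL t') (LC t' Ht') (IL t'.+1) (ID _ _ t' (ltnSn n) Ht) crossC
     (ID _ _ t'.+1 (ltnSn n) Ht).
  have c3E := covZD3r _ _ _ _ (1 - alpha n t') (alpha n t') (alpha n t' * gamma) _ _ _
     (IL t.+1) (IL t') (LC t' Ht') (IL t'.+1) (IC t.+1 t') (cross t.+1 t' Ht')
     (IC t.+1 t'.+1).
  rewrite (covZD3l _ _ _ _ (1 - alpha n t) (alpha n t) (alpha n t * gamma) _ _ _ _ _ _ _ c1E c2E c3E); last 4 first.
  + by apply: L2D; [apply: L2D|]; apply: L2Z => //; exact: LC.
  + exact: IL.
  + exact: LC.
  + exact: IL.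
  congr EFin; case: eqP => [<-|_]; rewrite ?mulr0n ?mulr1n; ring.
- move=> m s t hm hs; rewrite VS; case: ifP => Ht; last exact: covariance_cst_r.
  have hm1 : (1 <= m)%N by apply: leq_trans hm.
  have [Lm _] := Hmom _ _ hm1 hs.
  have c2 : covariance P (chat m s) (chat n.+1 t) = 0%:E.
    rewrite cov_chat //; case: eqP => [[e _]|_]; last by rewrite mul0r.
    by move: hm; rewrite e ltnn.
  rewrite (covZD3r _ _ _ _ _ _ _ _ _ _ Lm (IL t) (LC t Ht) (IL t.+1) (ID _ _ t (ltnW hm) hs) c2
    (ID _ _ t.+1 (ltnW hm) hs)).
  congr EFin; ring.
Qed.

End main.

Theorem proposition6 (R : realType) (d : measure_display) (Om : measurableType d)
  (P : probability Om R) (T : nat) (gamma c sigma2 : R)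
  (alpha : nat -> nat -> R) (chat : nat -> nat -> {RV P >-> R}) :
  (2 <= T)%N ->
  mutually_independent
    [set nt : nat * nat | (1 <= nt.1)%N /\ in_range T nt.2]
    (fun nt => chat nt.1 nt.2) ->
  identically_distributed
    [set nt : nat * nat | (1 <= nt.1)%N /\ in_range T nt.2]
    (fun nt => chat nt.1 nt.2) ->
  (forall n t, (1 <= n)%N -> in_range T t ->
     (chat n t : Om -> R) \in Lfun P 2%:E /\
     ('E_P[chat n t] = c%:E)%E /\ variance P (chat n t) = sigma2%:E) ->
  forall n t t', (1 <= n)%N -> in_range T t -> in_range T t' ->
    ('E_P[vbar T gamma alpha (fun m s => (chat m s : Om -> R)) n t]
      = (delta T gamma alpha n t * c)%:E)%E /\
    covariance P (vbar T gamma alpha (fun m s => (chat m s : Om -> R)) n t)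
                 (vbar T gamma alpha (fun m s => (chat m s : Om -> R)) n t')
      = (lambda T gamma alpha n t t' * sigma2)%:E.
Proof.
move=> _ Hind _ Hmom n t t' _ _ _.
have [_ E C _] := @claim R d Om P T gamma c sigma2 alpha chat Hind Hmom n.
by split; [exact: E|exact: C].
Qed.
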